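(* Let $W=W_1\times\cdots\times W_k$ be a Coxeter group written as a product of irreducible Coxeter groups (with generating set the disjoint union of those of the factors). Then $W$ is FC-periodic if and only if all factors $W_i$ are FC-finite except possibly one factor, which is FC-periodic.
   Context: For a Coxeter system $(W,S)$ (matrix $(m_{st})$, length $\ell$), $w$ is fully commutative (FC) if any two reduced expressions of $w$ are related by repeatedly swapping adjacent letters $s,t$ with $m_{st}=2$; $W^{FC}_l$ is the set of FC elements of length $l$. $W$ is FC-finite if it has finitely many FC elements, and FC-periodic if the sequence $(|W^{FC}_l|)_{l\ge0}$ is ultimately periodic (there are $p\ge1$, $l_0$ with $|W^{FC}_{l+p}|=|W^{FC}_l|$ for $l\ge l_0$). A Coxeter group is irreducible if its Coxeter graph (vertices $S$, edges $\{s,t\}$ with $m_{st}\ge3$) is connected. *)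

(* Defs.v *)
From Stdlib Require Import Relation_Operators ClassicalEpsilon.
From HB Require Import structures.
From mathcomp Require Import all_boot.
Set Implicit Arguments. Unset Strict Implicit. Unset Printing Implicit Defensive.

Definition pbool (P : Prop) : bool :=
  if excluded_middle_informative P then true else false.

(* A Coxeter matrix on a finite generating set S is m : S -> S -> nat,
   with the convention m s t = 0 encoding m_{st} = infinity. *)
Definition coxeter_matrix (S : finType) (m : S -> S -> nat) : Prop :=
  [/\ forall s, m s s = 1,
      forall s t, m s t = m t s &
      forall s t, s != t -> m s t != 1].

Fixpoint alt (S : Type) (s t : S) (n : nat) : seq S :=
  if n is n'.+1 then s :: alt t s n' else [::].

(* W = free monoid on S modulo ss = 1 and the braid relations
   (this monoid presentation gives the Coxeter group). *)
Inductive cox_step (S : finType) (m : S -> S -> nat) : seq S -> seq S -> Prop :=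
| cs_del (a b : seq S) (s : S) : cox_step m (a ++ [:: s; s] ++ b) (a ++ b)
| cs_braid (a b : seq S) (s t : S) : s != t -> m s t != 0 ->
    cox_step m (a ++ alt s t (m s t) ++ b) (a ++ alt t s (m s t) ++ b).

Definition same_elt (S : finType) (m : S -> S -> nat) : seq S -> seq S -> Prop :=
  clos_refl_sym_trans _ (cox_step m).

Definition reduced (S : finType) (m : S -> S -> nat) (w : seq S) : Prop :=
  forall v, same_elt m w v -> size w <= size v.

Inductive comm_step (S : finType) (m : S -> S -> nat) : seq S -> seq S -> Prop :=
| cm_swap (a b : seq S) (s t : S) : m s t = 2 ->
    comm_step m (a ++ [:: s; t] ++ b) (a ++ [:: t; s] ++ b).

Definition comm_equiv (S : finType) (m : S -> S -> nat) : seq S -> seq S -> Prop :=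
  clos_refl_sym_trans _ (comm_step m).

Definition FC_word (S : finType) (m : S -> S -> nat) (w : seq S) : Prop :=
  reduced m w /\ forall v, same_elt m w v -> reduced m v -> comm_equiv m w v.

(* |W^FC_l| : number of elements (classes of words) that are FC of length l *)
Definition FC_count (S : finType) (m : S -> S -> nat) (l : nat) : nat :=
  #|[set [set v : l.-tuple S | pbool (same_elt m w v)]
      | w : l.-tuple S in [set w : l.-tuple S | pbool (FC_word m w)]]|.

Definition FC_finite (S : finType) (m : S -> S -> nat) : Prop :=
  exists ws : seq (seq S),
    forall w, FC_word m w -> exists2 v, v \in ws & same_elt m w v.

Definition FC_periodic (S : finType) (m : S -> S -> nat) : Prop :=
  exists p l0, 0 < p /\ forall l, l0 <= l -> FC_count m (l + p) = FC_count m l.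

(* Coxeter graph: edge {s,t} iff s <> t and m_{st} >= 3 (incl. infinity) *)
Definition cox_edge (S : finType) (m : S -> S -> nat) : rel S :=
  fun s t => (s != t) && (m s t != 2).

Definition irreducible (S : finType) (m : S -> S -> nat) : Prop :=
  forall s t : S, connect (cox_edge m) s t.

(* Coxeter matrix of the direct product W_1 x ... x W_k, generating set the
   disjoint union {i : 'I_k & T i}; generators of distinct factors commute. *)
Definition prod_mx (k : nat) (T : 'I_k -> finType)
    (mi : forall i, T i -> T i -> nat) (x y : {i : 'I_k & T i}) : nat :=
  if tag x == tag y then mi (tag x) (tagged x) (tagged_as x y) else 2.

(* Main.v *)
Require Import Defs.
From Stdlib Require Import Relation_Operators ClassicalEpsilon Classical.
From mathcomp Require Import all_boot zify.
Set Implicit Arguments. Unset Strict Implicit. Unset Printing Implicit Defensive.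

Lemma crst_map (A B : Type) (R : A -> A -> Prop) (R' : B -> B -> Prop) (F : A -> B) :
  (forall u v, R u v -> clos_refl_sym_trans B R' (F u) (F v)) ->
  forall u v, clos_refl_sym_trans A R u v -> clos_refl_sym_trans B R' (F u) (F v).
Proof.
move=> H u v; elim => [x y /H //|x|x y _ IH|x y z _ IH1 _ IH2].
- exact: rst_refl.
- exact: rst_sym.
- exact: rst_trans IH1 IH2.
Qed.

Lemma same_cat3 (S : finType) (m : S -> S -> nat) (a b u v : seq S) :
  same_elt m u v -> same_elt m (a ++ u ++ b) (a ++ v ++ b).
Proof.
apply: (crst_map (F := fun x => a ++ x ++ b)) => u0 v0 [a' b' s|a' b' s t st mst].
- move: (cs_del m (a ++ a') (b' ++ b) s); rewrite -!catA /= => H; exact: rst_step.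
- move: (cs_braid (a ++ a') (b' ++ b) st mst); rewrite -!catA /= => H; exact: rst_step.
Qed.

Lemma comm_cat3 (S : finType) (m : S -> S -> nat) (a b u v : seq S) :
  comm_equiv m u v -> comm_equiv m (a ++ u ++ b) (a ++ v ++ b).
Proof.
apply: (crst_map (F := fun x => a ++ x ++ b)) => u0 v0 [a' b' s t mst].
move: (cm_swap (a ++ a') (b' ++ b) mst); rewrite -!catA /= => H; exact: rst_step.
Qed.

Lemma same_cat (S : finType) (m : S -> S -> nat) (u u' v v' : seq S) :
  same_elt m u u' -> same_elt m v v' -> same_elt m (u ++ v) (u' ++ v').
Proof.
move=> h1 h2; apply: (@rst_trans _ _ _ (u' ++ v)).
- exact: (same_cat3 [::] v h1).
- by move: (same_cat3 u' [::] h2); rewrite !cats0.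
Qed.

Lemma comm_cat (S : finType) (m : S -> S -> nat) (u u' v v' : seq S) :
  comm_equiv m u u' -> comm_equiv m v v' -> comm_equiv m (u ++ v) (u' ++ v').
Proof.
move=> h1 h2; apply: (@rst_trans _ _ _ (u' ++ v)).
- exact: (comm_cat3 [::] v h1).
- by move: (comm_cat3 u' [::] h2); rewrite !cats0.
Qed.

Lemma pmap_alt (S S' : Type) (h : S -> option S') s t x y n :
  h s = Some x -> h t = Some y -> pmap h (alt s t n) = alt x y n.
Proof.
elim: n s t x y => [//|n IH] s t x y hs ht /=; by rewrite hs /= (IH t s y x).
Qed.

Lemma pmap_alt0 (S S' : Type) (h : S -> option S') s t n :
  h s = None -> h t = None -> pmap h (alt s t n) = [::].
Proof.
elim: n s t => [//|n IH] s t hs ht /=; by rewrite hs /= IH.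
Qed.

Lemma map_alt (S S' : Type) (f : S -> S') s t n : map f (alt s t n) = alt (f s) (f t) n.
Proof. by elim: n s t => [//|n IH] s t /=; rewrite IH. Qed.

Lemma same_pmap (S S' : finType) (m : S -> S -> nat) (m' : S' -> S' -> nat) (h : S -> option S') :
  (forall s t x y, h s = Some x -> h t = Some y -> m' x y = m s t) ->
  (forall s t x, h s = Some x -> h t = Some x -> s = t) ->
  (forall s t x, h s = Some x -> h t = None -> m s t = 2 /\ m t s = 2) ->
  forall u v, same_elt m u v -> same_elt m' (pmap h u) (pmap h v).
Proof.
move=> hm hi hc; apply: crst_map => u v [a b s|a b s t st mst]; rewrite !pmap_cat.
- case hs: (h s) => [x|] /=; rewrite hs /=; last exact: rst_refl.
  by apply: rst_step; apply: (cs_del m' (pmap h a) (pmap h b) x).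
- case hs: (h s) => [x|]; case ht: (h t) => [y|].
  + rewrite (pmap_alt _ hs ht) (pmap_alt _ ht hs) -(hm _ _ _ _ hs ht).
    apply: rst_step; apply: cs_braid; last by rewrite (hm _ _ _ _ hs ht).
    apply/eqP => exy; subst y; move/eqP: st; apply; exact: hi hs ht.
  + have [e _] := hc _ _ _ hs ht; rewrite e /= hs ht /=; exact: rst_refl.
  + have [_ e] := hc _ _ _ ht hs; rewrite e /= hs ht /=; exact: rst_refl.
  + rewrite !pmap_alt0 //; exact: rst_refl.
Qed.

Lemma comm_pmap (S S' : finType) (m : S -> S -> nat) (m' : S' -> S' -> nat) (h : S -> option S') :
  (forall s t x y, h s = Some x -> h t = Some y -> m' x y = m s t) ->
  forall u v, comm_equiv m u v -> comm_equiv m' (pmap h u) (pmap h v).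
Proof.
move=> hm; apply: crst_map => u v [a b s t mst]; rewrite !pmap_cat /=.
case hs: (h s) => [x|]; case ht: (h t) => [y|] /=; try exact: rst_refl.
apply: rst_step; apply: cm_swap; by rewrite (hm _ _ _ _ hs ht).
Qed.

Lemma same_map (S S' : finType) (m : S -> S -> nat) (m' : S' -> S' -> nat) (f : S' -> S) :
  injective f -> (forall x y, m (f x) (f y) = m' x y) ->
  forall u v, same_elt m' u v -> same_elt m (map f u) (map f v).
Proof.
move=> fi hm; apply: crst_map => u v [a b s|a b s t st mst]; rewrite !map_cat /=.
- by apply: rst_step; apply: cs_del.
- rewrite !map_alt -hm; apply: rst_step.
  apply: cs_braid; last by rewrite hm.
  by rewrite (inj_eq fi).
Qed.

Lemma comm_same (S : finType) (m : S -> S -> nat) u v : comm_equiv m u v -> same_elt m u v.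
Proof.
move=> H; induction H as [u0 v0 [a b s t mst]|x|x y _ IH|x y z _ IH1 _ IH2].
- case: (eqVneq s t) => [<-|st]; first exact: rst_refl.
  have H := @cs_braid S m a b s t st; rewrite mst /= in H; apply: rst_step; exact: H.
- exact: rst_refl.
- exact: rst_sym.
- exact: rst_trans IH1 IH2.
Qed.

Definition hP (S : Type) (P : pred S) (s : S) : option S := if P s then Some s else None.

Lemma pmap_hP (S : Type) (P : pred S) w : pmap (hP P) w = filter P w.
Proof. by elim: w => [//|x w IH] /=; rewrite /hP; case: (P x); rewrite /= IH. Qed.

Definition closedP (S : finType) (m : S -> S -> nat) (P : pred S) :=
  forall s t, P s -> ~~ P t -> m s t = 2 /\ m t s = 2.

Lemma same_filter (S : finType) (m : S -> S -> nat) (P : pred S) : closedP m P ->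
  forall u v, same_elt m u v -> same_elt m (filter P u) (filter P v).
Proof.
move=> cP u v H; rewrite -!pmap_hP; apply: (same_pmap _ _ _ H).
- move=> s t x y; rewrite /hP; case: (P s) => // [[<-]]; case: (P t) => // [[<-]] //.
- move=> s t x; rewrite /hP; case: (P s) => // [[<-]]; case: (P t) => // [[<-]] //.
- move=> s t x; rewrite /hP; case Ps: (P s) => // _; case Pt: (P t) => // _.
  by apply: cP; rewrite ?Ps ?Pt.
Qed.

Lemma comm_filter (S : finType) (m : S -> S -> nat) (P : pred S) :
  forall u v, comm_equiv m u v -> comm_equiv m (filter P u) (filter P v).
Proof.
move=> u v H; rewrite -!pmap_hP; apply: (comm_pmap _ H).
move=> s t x y; rewrite /hP; case: (P s) => // [[<-]]; case: (P t) => // [[<-]] //.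
Qed.

Lemma comm_cons (S : finType) (m : S -> S -> nat) x u v :
  comm_equiv m u v -> comm_equiv m (x :: u) (x :: v).
Proof. by move=> H; move: (comm_cat3 [:: x] [::] H); rewrite !cats0. Qed.

Lemma same_cons (S : finType) (m : S -> S -> nat) x u v :
  same_elt m u v -> same_elt m (x :: u) (x :: v).
Proof. by move=> H; move: (same_cat3 [:: x] [::] H); rewrite !cats0. Qed.

Lemma comm_move (S : finType) (m : S -> S -> nat) (P : pred S) x u v :
  closedP m P -> all P u -> ~~ P x -> comm_equiv m (x :: u ++ v) (u ++ x :: v).
Proof.
move=> cP; elim: u => [|y u IH] /=; first by move=> _ _; exact: rst_refl.
case/andP=> Py Pu Px.
apply: (@rst_trans _ _ _ (y :: x :: u ++ v)).
- apply: rst_step; have [_ e] := cP _ _ Py Px; exact: (cm_swap [::] (u ++ v) e).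
- exact: comm_cons (IH Pu Px).
Qed.

Lemma comm_split (S : finType) (m : S -> S -> nat) (P : pred S) w :
  closedP m P -> comm_equiv m w (filter P w ++ filter (predC P) w).
Proof.
move=> cP; elim: w => [|x w IH]; first exact: rst_refl.
apply: (@rst_trans _ _ _ (x :: (filter P w ++ filter (predC P) w))); first exact: comm_cons.
rewrite /=; case Px: (P x) => /=; first exact: rst_refl.
exact: (@comm_move S m P x _ _ cP (filter_all P w) (negbT Px)).
Qed.

Lemma same_split (S : finType) (m : S -> S -> nat) (P : pred S) w :
  closedP m P -> same_elt m w (filter P w ++ filter (predC P) w).
Proof. by move=> cP; apply: comm_same; apply: comm_split. Qed.

Lemma same_sym (S : finType) (m : S -> S -> nat) u v : same_elt m u v -> same_elt m v u.
Proof. exact: rst_sym. Qed.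
Lemma same_trans (S : finType) (m : S -> S -> nat) v u w :
  same_elt m u v -> same_elt m v w -> same_elt m u w.
Proof. exact: rst_trans. Qed.
Lemma same_refl (S : finType) (m : S -> S -> nat) u : same_elt m u u.
Proof. exact: rst_refl. Qed.
Lemma comm_sym (S : finType) (m : S -> S -> nat) u v : comm_equiv m u v -> comm_equiv m v u.
Proof. exact: rst_sym. Qed.
Lemma comm_trans (S : finType) (m : S -> S -> nat) v u w :
  comm_equiv m u v -> comm_equiv m v w -> comm_equiv m u w.
Proof. exact: rst_trans. Qed.
Lemma comm_refl (S : finType) (m : S -> S -> nat) u : comm_equiv m u u.
Proof. exact: rst_refl. Qed.

Lemma reduced_same_size (S : finType) (m : S -> S -> nat) u v :
  reduced m u -> reduced m v -> same_elt m u v -> size u = size v.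
Proof.
move=> ru rv e; apply/eqP; rewrite eqn_leq (ru _ e) /=; apply: rv; exact: same_sym.
Qed.

Lemma reduced_eq_size (S : finType) (m : S -> S -> nat) w v :
  reduced m w -> same_elt m w v -> size v = size w -> reduced m v.
Proof.
move=> rw e sz x ex; rewrite sz; apply: rw; exact: same_trans ex.
Qed.

Lemma filter_predC_nil (S : Type) (P : pred S) u : all P u -> filter (predC P) u = [::].
Proof. by elim: u => [//|x u IH] /= /andP[-> /IH ->]. Qed.

Lemma closedC (S : finType) (m : S -> S -> nat) (P : pred S) : closedP m P -> closedP m (predC P).
Proof. move=> cP s t /= Ps; rewrite negbK => Pt; have [? ?] := cP _ _ Pt Ps; by split. Qed.

Lemma reduced_allP (S : finType) (m : S -> S -> nat) (P : pred S) v u :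
  closedP m P -> reduced m v -> same_elt m v u -> all P u -> all P v.
Proof.
move=> cP rv e au.
have h1 : same_elt m (filter (predC P) v) [::].
  by rewrite -(filter_predC_nil au); exact: (same_filter (closedC cP) e).
have h2 : same_elt m v (filter P v).
  apply: same_trans (same_split v cP) _.
  by move: (same_cat (same_refl m (filter P v)) h1); rewrite cats0.
have := rv _ h2; rewrite size_filter => h3.
by rewrite all_count eqn_leq count_size h3.
Qed.

Lemma filter_nil_allC (S : Type) (P : pred S) u : all (predC P) u -> filter P u = [::].
Proof. by elim: u => [//|x u IH] /= /andP[/negbTE -> /IH ->]. Qed.

Lemma filterC_Q (S : eqType) (P Q : pred S) w : (forall s, P s -> ~~ Q s) ->
  all (predU P Q) w -> filter (predC P) w = filter Q w.
Proof.
move=> dPQ /allP aw; apply: eq_in_filter => x /aw /= /orP[Px|Qx].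
- by rewrite Px (negbTE (dPQ _ Px)).
- by rewrite Qx; apply/negP => /dPQ; rewrite Qx.
Qed.

Lemma same_splitPQ (S : finType) (m : S -> S -> nat) (P Q : pred S) w :
  (forall s, P s -> ~~ Q s) -> closedP m P -> all (predU P Q) w ->
  same_elt m w (filter P w ++ filter Q w).
Proof. by move=> dPQ cP aw; rewrite -(filterC_Q dPQ aw); apply: same_split. Qed.

Lemma comm_splitPQ (S : finType) (m : S -> S -> nat) (P Q : pred S) w :
  (forall s, P s -> ~~ Q s) -> closedP m P -> all (predU P Q) w ->
  comm_equiv m w (filter P w ++ filter Q w).
Proof. by move=> dPQ cP aw; rewrite -(filterC_Q dPQ aw); apply: comm_split. Qed.

Lemma count_PQ_le (S : eqType) (P Q : pred S) v : (forall s, P s -> ~~ Q s) ->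
  count P v + count Q v <= size v.
Proof.
move=> dPQ; rewrite -count_predUI.
have -> : count (predI P Q) v = 0.
  apply/eqP; rewrite -leqn0 leqNgt -has_count; apply/hasP => -[x _ /= /andP[Px Qx]].
  by move: (dPQ _ Px); rewrite Qx.
by rewrite addn0 count_size.
Qed.

Lemma size_PQ (S : eqType) (P Q : pred S) v : (forall s, P s -> ~~ Q s) ->
  all (predU P Q) v -> size v = count P v + count Q v.
Proof.
move=> dPQ av; apply/eqP; rewrite eqn_leq count_PQ_le // andbT.
rewrite -count_predUI; move: av; rewrite all_count => /eqP <-; exact: leq_addr.
Qed.

Lemma R1P (S : finType) (m : S -> S -> nat) (P Q : pred S) w :
  (forall s, P s -> ~~ Q s) -> closedP m P -> all (predU P Q) w ->
  reduced m w -> reduced m (filter P w).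
Proof.
move=> dPQ cP aw rw v e.
have e2 : same_elt m w (v ++ filter Q w).
  apply: same_trans (same_splitPQ dPQ cP aw) _.
  exact: same_cat e (same_refl _ _).
have := rw _ e2; rewrite size_cat (size_PQ dPQ aw) -!size_filter.
by rewrite leq_add2r.
Qed.

Lemma R2 (S : finType) (m : S -> S -> nat) (P Q : pred S) w :
  (forall s, P s -> ~~ Q s) -> closedP m P -> closedP m Q -> all (predU P Q) w ->
  reduced m (filter P w) -> reduced m (filter Q w) -> reduced m w.
Proof.
move=> dPQ cP cQ aw rP rQ v e.
have h1 := rP _ (same_filter cP e).
have h2 := rQ _ (same_filter cQ e).
rewrite (size_PQ dPQ aw) -!size_filter.
apply: leq_trans (count_PQ_le v dPQ); rewrite -!size_filter; exact: leq_add.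
Qed.

Lemma FC1P (S : finType) (m : S -> S -> nat) (P Q : pred S) w :
  (forall s, P s -> ~~ Q s) -> closedP m P -> all (predU P Q) w ->
  FC_word m w -> FC_word m (filter P w).
Proof.
move=> dPQ cP aw [rw fw]; have rP := R1P dPQ cP aw rw; split=> // v e rv.
have av : all P v by apply: (reduced_allP cP rv (same_sym e)); exact: filter_all.
have e2 : same_elt m w (v ++ filter Q w).
  apply: same_trans (same_splitPQ dPQ cP aw) _.
  exact: same_cat e (same_refl _ _).
have sz : size (v ++ filter Q w) = size w.
  rewrite size_cat -(reduced_same_size rP rv e) !size_filter.
  by rewrite (size_PQ dPQ aw).
have := comm_filter P (fw _ e2 (reduced_eq_size rw e2 sz)).
rewrite filter_cat (all_filterP av) (@filter_nil_allC _ P (filter Q w)) ?cats0 //.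
move: (filter_all Q w); apply: sub_all => x /= Qx; apply/negP => Px; by move: (dPQ _ Px); rewrite Qx.
Qed.

Lemma FC2 (S : finType) (m : S -> S -> nat) (P Q : pred S) w :
  (forall s, P s -> ~~ Q s) -> closedP m P -> closedP m Q -> closedP m (predU P Q) ->
  all (predU P Q) w ->
  FC_word m (filter P w) -> FC_word m (filter Q w) -> FC_word m w.
Proof.
move=> dPQ cP cQ cPQ aw [rP fP] [rQ fQ].
have rw := R2 dPQ cP cQ aw rP rQ; split=> // v e rv.
have av : all (predU P Q) v := reduced_allP cPQ rv (same_sym e) aw.
have dQP : forall s, Q s -> ~~ P s.
  move=> s Qs; apply/negP => Ps; by move: (dPQ _ Ps); rewrite Qs.
have avQ : all (predU Q P) v.
  by move: av; apply: sub_all => x /= /orP[]->; rewrite ?orbT.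
have c1 := fP _ (same_filter cP e) (R1P dPQ cP av rv).
have c2 := fQ _ (same_filter cQ e) (R1P dQP cQ avQ rv).
apply: comm_trans (comm_splitPQ dPQ cP aw) _.
apply: comm_trans (comm_cat c1 c2) _.
exact: comm_sym (comm_splitPQ dPQ cP av).
Qed.

Lemma same_PQ (S : finType) (m : S -> S -> nat) (P Q : pred S) w w' :
  (forall s, P s -> ~~ Q s) -> closedP m P -> closedP m Q ->
  all (predU P Q) w -> all (predU P Q) w' ->
  same_elt m w w' <-> same_elt m (filter P w) (filter P w') /\ same_elt m (filter Q w) (filter Q w').
Proof.
move=> dPQ cP cQ aw aw'; split.
- by move=> e; split; apply: same_filter.
- case=> e1 e2; apply: same_trans (same_splitPQ dPQ cP aw) _.
  apply: same_trans (same_cat e1 e2) _.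
  exact: same_sym (same_splitPQ dPQ cP aw').
Qed.

Lemma comm_map (S S' : finType) (m : S -> S -> nat) (m' : S' -> S' -> nat) (f : S' -> S) :
  (forall x y, m (f x) (f y) = m' x y) ->
  forall u v, comm_equiv m' u v -> comm_equiv m (map f u) (map f v).
Proof.
move=> hm; apply: crst_map => u v [a b s t mst]; rewrite !map_cat /=.
by apply: rst_step; apply: cm_swap; rewrite hm.
Qed.

Definition hinv (S S' : finType) (f : S' -> S) (y : S) : option S' := [pick x | f x == y].

Lemma hinv_f (S S' : finType) (f : S' -> S) x : injective f -> hinv f (f x) = Some x.
Proof.
move=> fi; rewrite /hinv; case: pickP => [x' /eqP/fi -> //|/(_ x)]; by rewrite eqxx.
Qed.

Lemma hinv_some (S S' : finType) (f : S' -> S) y x : hinv f y = Some x -> f x = y.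
Proof. rewrite /hinv; case: pickP => [x' /eqP e [<-] //|//]. Qed.

Lemma hinv_none (S S' : finType) (f : S' -> S) (P : pred S) y :
  (forall y, P y -> exists x, f x = y) -> hinv f y = None -> ~~ P y.
Proof.
move=> hfP; rewrite /hinv; case: pickP => // H _; apply/negP => /hfP [x ex].
by move: (H x); rewrite ex eqxx.
Qed.

Lemma pmap_hinv_map (S S' : finType) (f : S' -> S) w : injective f -> pmap (hinv f) (map f w) = w.
Proof. by move=> fi; elim: w => [//|x w IH] /=; rewrite hinv_f //= IH. Qed.

Lemma map_pmap_hinv (S S' : finType) (f : S' -> S) (P : pred S) v :
  (forall y, P y -> exists x, f x = y) -> all P v -> map f (pmap (hinv f) v) = v.
Proof.
move=> hfP; elim: v => [//|y v IH] /= /andP[Py av].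
case e: (hinv f y) => [x|] /=; first by rewrite (hinv_some e) IH.
by move: (hinv_none hfP e); rewrite Py.
Qed.

Lemma same_proj (S S' : finType) (m : S -> S -> nat) (m' : S' -> S' -> nat) (f : S' -> S) (P : pred S) :
  (forall x, P (f x)) -> (forall y, P y -> exists x, f x = y) ->
  closedP m P -> (forall x y, m (f x) (f y) = m' x y) ->
  forall u v, same_elt m u v -> same_elt m' (pmap (hinv f) u) (pmap (hinv f) v).
Proof.
move=> Pf fP cP hm u v e; apply: (same_pmap _ _ _ e).
- by move=> s t x y /hinv_some <- /hinv_some <-.
- by move=> s t x /hinv_some <- /hinv_some.
- move=> s t x /hinv_some <- /(hinv_none fP) nP; exact: cP (Pf x) nP.
Qed.

Lemma same_emb (S S' : finType) (m : S -> S -> nat) (m' : S' -> S' -> nat) (f : S' -> S) (P : pred S) :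
  injective f -> (forall x, P (f x)) -> (forall y, P y -> exists x, f x = y) ->
  closedP m P -> (forall x y, m (f x) (f y) = m' x y) ->
  forall u v, same_elt m' u v <-> same_elt m (map f u) (map f v).
Proof.
move=> fi Pf fP cP hm u v; split; first exact: same_map.
move=> e; rewrite -(pmap_hinv_map u fi) -(pmap_hinv_map v fi).
exact: (same_proj Pf fP cP hm e).
Qed.

Lemma comm_emb (S S' : finType) (m : S -> S -> nat) (m' : S' -> S' -> nat) (f : S' -> S) :
  injective f -> (forall x y, m (f x) (f y) = m' x y) ->
  forall u v, comm_equiv m' u v <-> comm_equiv m (map f u) (map f v).
Proof.
move=> fi hm u v; split; first exact: comm_map.
move=> e; rewrite -(pmap_hinv_map u fi) -(pmap_hinv_map v fi).
apply: (comm_pmap _ e).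
by move=> s t x y /hinv_some <- /hinv_some <-.
Qed.

Lemma size_pmap_le (S S' : Type) (h : S -> option S') v : size (pmap h v) <= size v.
Proof. by elim: v => [//|y v IH] /=; case: (h y) => [x|] /=; rewrite ?ltnS // ltnW. Qed.

Lemma red_emb (S S' : finType) (m : S -> S -> nat) (m' : S' -> S' -> nat) (f : S' -> S) (P : pred S) :
  injective f -> (forall x, P (f x)) -> (forall y, P y -> exists x, f x = y) ->
  closedP m P -> (forall x y, m (f x) (f y) = m' x y) ->
  forall w, reduced m' w <-> reduced m (map f w).
Proof.
move=> fi Pf fP cP hm w; split.
- move=> rw v e; have := same_proj Pf fP cP hm e; rewrite pmap_hinv_map // => /rw.
  rewrite size_map => h; exact: leq_trans h (size_pmap_le _ _).
- move=> rw v e; have := rw _ (same_map fi hm e); by rewrite !size_map.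
Qed.

Lemma FC_emb (S S' : finType) (m : S -> S -> nat) (m' : S' -> S' -> nat) (f : S' -> S) (P : pred S) :
  injective f -> (forall x, P (f x)) -> (forall y, P y -> exists x, f x = y) ->
  closedP m P -> (forall x y, m (f x) (f y) = m' x y) ->
  forall w, FC_word m' w <-> FC_word m (map f w).
Proof.
move=> fi Pf fP cP hm w; have R := red_emb fi Pf fP cP hm.
have aw : forall u, all P (map f u) by move=> u; rewrite all_map; apply/allP => x _; exact: Pf.
split.
- move=> [rw fw]; split; first by apply/R.
  move=> v e rv.
  have av : all P v := reduced_allP cP rv (same_sym e) (aw w).
  rewrite -(map_pmap_hinv fP av) in e rv *.
  apply/(comm_emb fi hm); apply: fw; [exact/(same_emb fi Pf fP cP hm) | exact/R].
- move=> [rw fw]; split; first by apply/R.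
  move=> v e rv; apply/(comm_emb fi hm); apply: fw; [exact/(same_emb fi Pf fP cP hm) | exact/R].
Qed.

Lemma pboolP (P : Prop) : reflect P (pbool P).
Proof. by rewrite /pbool; case: excluded_middle_informative => h; constructor. Qed.

Lemma pbool_iff (P Q : Prop) : (P <-> Q) -> pbool P = pbool Q.
Proof. by move=> [h1 h2]; apply/pboolP/pboolP. Qed.

Definition cls (S : finType) (m : S -> S -> nat) (l : nat) (w : seq S) : {set l.-tuple S} :=
  [set v : l.-tuple S | pbool (same_elt m w v)].
Definition FCset (S : finType) (m : S -> S -> nat) (P : pred S) l : {set l.-tuple S} :=
  [set w : l.-tuple S | pbool (FC_word m w) && all P w].
Definition cnt (S : finType) (m : S -> S -> nat) (P : pred S) l :=
  #|[set cls m l w | w : l.-tuple S in FCset m P l]|.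

Lemma FC_count_cnt (S : finType) (m : S -> S -> nat) l : FC_count m l = cnt m predT l.
Proof.
rewrite /FC_count /cnt /FCset.
have -> : [set w : l.-tuple S | pbool (FC_word m w) && all predT w] =
          [set w : l.-tuple S | pbool (FC_word m w)].
  by apply/setP => w; rewrite !inE all_predT andbT.
by [].
Qed.

Lemma cls_eqE (S : finType) (m : S -> S -> nat) l (u v : seq S) :
  size u = l -> cls m l u = cls m l v <-> same_elt m u v.
Proof.
move=> su; split.
- have su' : size u == l by rewrite su.
  move=> E; have : (Tuple su') \in cls m l u by rewrite inE; apply/pboolP; exact: same_refl.
  rewrite E inE => /pboolP /= h; exact: same_sym.
- move=> e; apply/setP => x; rewrite !inE; apply: pbool_iff; split => h.
  + exact: same_trans (same_sym e) h.
  + exact: same_trans e h.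
Qed.

Lemma card_imset_kernel_le (X Y Z : finType) (A : {set X}) (F : X -> Y) (G : X -> Z) :
  {in A &, forall x y, F x = F y -> G x = G y} -> #|G @: A| <= #|F @: A|.
Proof.
move=> H; case: (set_0Vmem A) => [->|[x0 Ax0]]; first by rewrite !imset0 cards0.
pose phi y := if [pick x in A | F x == y] is Some x then G x else G x0.
apply: leq_trans (leq_imset_card phi (F @: A)).
apply: subset_leq_card; apply/subsetP => z /imsetP[x Ax ->].
apply/imsetP; exists (F x); first exact: imset_f.
rewrite /phi; case: pickP => [x' /andP[Ax' /eqP e]|/(_ x)]; last by rewrite Ax eqxx.
by rewrite (H _ _ Ax Ax' (esym e)).
Qed.

Lemma card_imset_kernel (X Y Z : finType) (A : {set X}) (F : X -> Y) (G : X -> Z) :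
  {in A &, forall x y, F x = F y <-> G x = G y} -> #|F @: A| = #|G @: A|.
Proof.
move=> H; apply/eqP; rewrite eqn_leq !card_imset_kernel_le //.
- by move=> x y Ax Ay /(H _ _ Ax Ay).
- by move=> x y Ax Ay /(H _ _ Ax Ay).
Qed.

Lemma card_transport (X X' Y Y' : finType) (A : {set X}) (A' : {set X'}) (h : X' -> X)
  (F : X -> Y) (F' : X' -> Y') :
  h @: A' = A -> {in A' &, forall x y, F' x = F' y <-> F (h x) = F (h y)} ->
  #|F' @: A'| = #|F @: A|.
Proof. move=> hA H; rewrite -hA -imset_comp; exact: card_imset_kernel. Qed.

Lemma FC_count_emb (S S' : finType) (m : S -> S -> nat) (m' : S' -> S' -> nat) (f : S' -> S) (P : pred S) :
  injective f -> (forall x, P (f x)) -> (forall y, P y -> exists x, f x = y) ->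
  closedP m P -> (forall x y, m (f x) (f y) = m' x y) ->
  forall l, FC_count m' l = cnt m P l.
Proof.
move=> fi Pf fP cP hm l; rewrite FC_count_cnt /cnt.
apply: (card_transport (h := fun w : l.-tuple S' => map_tuple f w)).
- apply/eqP; rewrite eqEsubset; apply/andP; split; apply/subsetP => w.
  + case/imsetP => x; rewrite inE => /andP[/pboolP fx _] ->; rewrite inE; apply/andP; split.
    * by apply/pboolP => /=; apply/(FC_emb fi Pf fP cP hm).
    * by rewrite /= all_map; apply/allP => y _; exact: Pf.
  + rewrite inE => /andP[/pboolP fw aw].
    have sz : size (pmap (hinv f) w) == l.
      by rewrite -(size_map f) (map_pmap_hinv fP aw) size_tuple.
    apply/imsetP; exists (Tuple sz).
    * rewrite inE all_predT andbT; apply/pboolP; apply/(FC_emb fi Pf fP cP hm).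
      by rewrite /= (map_pmap_hinv fP aw).
    * by apply: val_inj; rewrite /= (map_pmap_hinv fP aw).
- move=> x y _ _; split.
  + move/(cls_eqE _ _ (size_tuple x)) => e; apply/(cls_eqE _ _ (size_tuple _)).
    exact/(same_emb fi Pf fP cP hm).
  + move/(cls_eqE _ _ (size_tuple _)) => e; apply/(cls_eqE _ _ (size_tuple x)).
    exact/(same_emb fi Pf fP cP hm).
Qed.

Lemma card_imset_part (X Y : finType) (A : {set X}) (F : X -> Y) (k : X -> nat) :
  {in A &, forall x y, F x = F y -> k x = k y} ->
  forall n, #|F @: [set x in A | k x < n]| = \sum_(a < n) #|F @: [set x in A | k x == a]|.
Proof.
move=> H; elim=> [|n IH].
- rewrite big_ord0; apply/eqP; rewrite cards_eq0; apply/eqP; apply/setP => y.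
  by rewrite inE; apply/imsetP => -[x]; rewrite inE ltn0 andbF.
- rewrite big_ord_recr /= -IH.
  have -> : [set x in A | k x < n.+1] = [set x in A | k x < n] :|: [set x in A | k x == n].
    by apply/setP => x; rewrite !inE ltnS leq_eqVlt orbC -andb_orr.
  rewrite imsetU cardsU.
  have -> : F @: [set x in A | k x < n] :&: F @: [set x in A | k x == n] = set0.
    apply/setP => y; rewrite !inE; apply/negP => /andP[/imsetP[x1 + ->] /imsetP[x2]].
    rewrite !inE => /andP[A1 k1] /andP[A2 /eqP k2] e.
    by move: (H _ _ A1 A2 e); rewrite k2 => kk; rewrite kk ltnn in k1.
  by rewrite cards0 subn0.
Qed.

Lemma card_imset_part_all (X Y : finType) (A : {set X}) (F : X -> Y) (k : X -> nat) n :
  {in A &, forall x y, F x = F y -> k x = k y} -> {in A, forall x, k x < n} ->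
  #|F @: A| = \sum_(a < n) #|F @: [set x in A | k x == a]|.
Proof.
move=> H Hn; rewrite -card_imset_part //.
have E : [set x in A | k x < n] = A.
  by apply/setP => x; rewrite inE; case Ax: (x \in A) => //=; exact: Hn.
by rewrite E.
Qed.

Lemma cnt_split (S : finType) (m : S -> S -> nat) (P Q : pred S) :
  (forall s, P s -> ~~ Q s) -> closedP m P -> closedP m Q -> closedP m (predU P Q) ->
  forall l, cnt m (predU P Q) l = \sum_(a < l.+1) cnt m P a * cnt m Q (l - a).
Proof.
move=> dPQ cP cQ cPQ l.
have dQP : forall s, Q s -> ~~ P s.
  move=> s Qs; apply/negP => Ps; by move: (dPQ _ Ps); rewrite Qs.
have memA : forall x : l.-tuple S, x \in FCset m (predU P Q) l ->
    FC_word m x /\ all (predU P Q) x.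
  by move=> x; rewrite inE => /andP[/pboolP ? ?].
rewrite /cnt (card_imset_part_all (k := fun x : l.-tuple S => count P x) (n := l.+1)).
2: { move=> x y /memA [[rx _] ax] /memA [[ry _] ay] /(cls_eqE _ _ (size_tuple x)) e.
     rewrite -!size_filter; apply: reduced_same_size (same_filter cP e);
     exact: (R1P dPQ cP). }
2: { by move=> x _; rewrite ltnS -{2}(size_tuple x) count_size. }
apply: eq_bigr => -[a /=]; rewrite ltnS => al _.
have sQ : forall x : l.-tuple S, all (predU P Q) x -> count P x = a -> size (filter Q x) = l - a.
  move=> x ax xa; have := size_PQ dPQ ax; rewrite size_tuple xa size_filter.
  move: (count Q x) => c ->; by rewrite addKn.
rewrite (card_imset_kernel (G := fun x : l.-tuple S => (cls m a (filter P x), cls m (l - a) (filter Q x)))).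
2: { move=> x y; rewrite !inE => /andP[xA /eqP xa] /andP[yA /eqP ya].
     case/andP: xA => /pboolP fx ax; case/andP: yA => /pboolP fy ay.
     have sPx : size (filter P x) = a by rewrite size_filter.
     have sQx := sQ _ ax xa.
     split.
     + move/(cls_eqE _ _ (size_tuple x))/(same_PQ dPQ cP cQ ax ay) => -[e1 e2].
       by congr pair; apply/cls_eqE.
     + case=> /(cls_eqE _ _ sPx) e1 /(cls_eqE _ _ sQx) e2.
       apply/(cls_eqE _ _ (size_tuple x)); apply/(same_PQ dPQ cP cQ ax ay); by split. }
rewrite (_ : _ @: _ = setX [set cls m a w | w : a.-tuple S in FCset m P a]
                          [set cls m (l - a) w | w : (l - a).-tuple S in FCset m Q (l - a)]) ?cardsX //.
apply/eqP; rewrite eqEsubset; apply/andP; split; apply/subsetP.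
- move=> y /imsetP[x]; rewrite inE => /andP[xA /eqP xa] ->.
  have [fx ax] := memA _ xA.
  have sPx : size (filter P x) == a by rewrite size_filter xa.
  have sQx : size (filter Q x) == l - a by rewrite (sQ _ ax xa).
  have axQ : all (predU Q P) x.
    by move: ax; apply: sub_all => z /= /orP[]->; rewrite ?orbT.
  rewrite inE /=; apply/andP; split; apply/imsetP.
  + exists (Tuple sPx) => //; rewrite inE; apply/andP; split.
    * by apply/pboolP; exact: (FC1P dPQ cP ax fx).
    * exact: filter_all.
  + exists (Tuple sQx) => //; rewrite inE; apply/andP; split.
    * by apply/pboolP; exact: (FC1P dQP cQ axQ fx).
    * exact: filter_all.
- case=> [u v]; rewrite inE /= => /andP[/imsetP[u' u'in ->] /imsetP[v' v'in ->]].
  move: u'in v'in; rewrite !inE => /andP[/pboolP fu au] /andP[/pboolP fv av].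
  have sz : size (u' ++ v' : seq S) == l by rewrite size_cat !size_tuple subnKC.
  have auC : all (predC Q) u'.
    by move: au; apply: sub_all => z /= /dPQ.
  have avC : all (predC P) v'.
    by move: av; apply: sub_all => z /= /dQP.
  have fPe : filter P (u' ++ v') = u'.
    by rewrite filter_cat (all_filterP au) (filter_nil_allC avC) cats0.
  have fQe : filter Q (u' ++ v') = v'.
    by rewrite filter_cat (all_filterP av) (filter_nil_allC auC).
  have auv : all (predU P Q) (u' ++ v').
    rewrite all_cat; apply/andP; split.
    + by move: au; apply: sub_all => z /= ->.
    + by move: av; apply: sub_all => z /= ->; rewrite orbT.
  apply/imsetP; exists (Tuple sz); last by rewrite /= fPe fQe.
  rewrite !inE /=; apply/andP; split; last by rewrite -size_filter fPe size_tuple.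
  apply/andP; split => //; apply/pboolP.
  by apply: (FC2 dPQ cP cQ cPQ auv); rewrite ?fPe ?fQe.
Qed.

Lemma FC_nil (S : finType) (m : S -> S -> nat) : FC_word m [::].
Proof.
split; first by move=> v _.
move=> v e rv; have := rv _ (same_sym e); rewrite leqn0 size_eq0 => /eqP ->.
exact: comm_refl.
Qed.

Lemma cnt0 (S : finType) (m : S -> S -> nat) (P : pred S) : cnt m P 0 = 1.
Proof.
rewrite /cnt (_ : FCset m P 0 = [set [tuple]]) ?imset_set1 ?cards1 //.
apply/setP => w; rewrite !inE (tuple0 w) eqxx /=; apply/andP; split=> //.
apply/pboolP; exact: FC_nil.
Qed.

Lemma cnt_pred0 (S : finType) (m : S -> S -> nat) (P : pred S) l :
  (forall s, ~~ P s) -> 0 < l -> cnt m P l = 0.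
Proof.
move=> nP lp; apply/eqP; rewrite cards_eq0; apply/eqP/setP => y; rewrite inE.
apply/imsetP => -[w]; rewrite inE => /andP[_ aw] _.
case: w aw => [[|x s] /= sz]; first by move: sz lp => /eqP <-.
by rewrite (negbTE (nP x)).
Qed.

Lemma cnt_gt0 (S : finType) (m : S -> S -> nat) (P : pred S) (w : seq S) :
  FC_word m w -> all P w -> 0 < cnt m P (size w).
Proof.
move=> fw aw; rewrite card_gt0; apply/set0Pn; exists (cls m (size w) (in_tuple w)).
apply: imset_f; rewrite inE aw andbT; apply/pboolP; exact: fw.
Qed.

Lemma cnt_eq0 (S : finType) (m : S -> S -> nat) (P : pred S) l :
  (forall w, FC_word m w -> all P w -> size w != l) -> cnt m P l = 0.
Proof.
move=> H; apply/eqP; rewrite cards_eq0; apply/eqP/setP => y; rewrite inE.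
apply/imsetP => -[w]; rewrite inE => /andP[/pboolP fw aw] _.
by move: (H _ fw aw); rewrite size_tuple eqxx.
Qed.

Definition ev0 (a : nat -> nat) := exists L, forall l, L <= l -> a l = 0.
Definition ultper (a : nat -> nat) := exists p l0, 0 < p /\ forall l, l0 <= l -> a (l + p) = a l.

Lemma FC_finite_ev0 (S : finType) (m : S -> S -> nat) : FC_finite m -> ev0 (FC_count m).
Proof.
case=> ws H; exists (\max_(v <- ws) size v).+1 => l Ll; rewrite FC_count_cnt.
apply: cnt_eq0 => w fw _; case: (H _ fw) => v vin e.
have := (proj1 fw) _ e => h; apply/eqP => sw; subst l.
have h2 : size v <= \max_(v <- ws) size v by apply: leq_bigmax_seq. have := leq_trans Ll (leq_trans h h2); by rewrite ltnn.
Qed.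

Lemma rem_cat' (T : eqType) (s : T) a b :
  rem s (a ++ b) = if s \in a then rem s a ++ b else a ++ rem s b.
Proof.
elim: a => [//|x a IH] /=; rewrite in_cons.
case: (eqVneq x s) => [->|xs] //=.
by rewrite IH; case: (s \in a).
Qed.


Lemma comm_rem (S : finType) (m : S -> S -> nat) (s : S) u v :
  comm_equiv m u v -> comm_equiv m (rem s u) (rem s v).
Proof.
apply: crst_map => u0 v0 [a b x y mxy]; rewrite !(rem_cat' s a).
case: (s \in a).
- by apply: rst_step; apply: cm_swap.
- rewrite /=; case: (eqVneq x s) => [xs|xs]; case: (eqVneq y s) => [ys|ys]; try exact: rst_refl.
  + by rewrite xs ys; exact: rst_refl.
  + apply: rst_step; exact: (cm_swap a (rem s b) mxy).
Qed.

Lemma comm_rev (S : finType) (m : S -> S -> nat) u v :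
  comm_equiv m u v -> comm_equiv m (rev u) (rev v).
Proof.
apply: crst_map => u0 v0 [a b x y mxy]; apply: rst_sym; apply: rst_step.
rewrite !rev_cat -!catA; exact: (cm_swap (rev b) (rev a) mxy).
Qed.

Lemma comm_cancel (S : finType) (m : S -> S -> nat) u v s :
  comm_equiv m (rcons u s) (rcons v s) -> comm_equiv m u v.
Proof.
move/(comm_rev)/(comm_rem s); rewrite !rev_rcons /= eqxx => /comm_rev; by rewrite !revK.
Qed.

Lemma FC_rcons (S : finType) (m : S -> S -> nat) u s : FC_word m (rcons u s) -> FC_word m u.
Proof.
have E : forall v, same_elt m v u -> same_elt m (rcons v s) (rcons u s).
  by move=> v e; rewrite -!cats1; apply: same_cat e (same_refl _ _).
move=> [ru fu]; have rU : reduced m u.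
  by move=> v e; have := ru _ (same_sym (E _ (same_sym e))); rewrite !size_rcons.
split=> // v e rv.
have e' := E _ (same_sym e).
have rvs : reduced m (rcons v s).
  apply: (reduced_eq_size ru (same_sym e')).
  by rewrite !size_rcons (reduced_same_size rU rv e).
exact: comm_cancel (fu _ (same_sym e') rvs).
Qed.

Lemma FC_prefix (S : finType) (m : S -> S -> nat) u v : FC_word m (u ++ v) -> FC_word m u.
Proof.
elim/last_ind: v => [|v x IH]; first by rewrite cats0.
by rewrite -rcons_cat => /FC_rcons.
Qed.

Fixpoint wordsle (S : finType) (n : nat) : seq (seq S) :=
  if n is n'.+1 then [::] :: [seq x :: w | x <- enum S, w <- wordsle S n'] else [:: [::]].

Lemma mem_wordsle (S : finType) n (w : seq S) : size w <= n -> w \in wordsle S n.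
Proof.
elim: n w => [|n IH] [|x w] //=. all: try by rewrite ?inE ?eqxx.
rewrite ltnS => sw; rewrite in_cons; apply/orP; right.
by apply: (allpairs_f (fun x w => x :: w)); [rewrite mem_enum | exact: IH].
Qed.

Lemma infinite_pos (S : finType) (m : S -> S -> nat) :
  ~ FC_finite m -> forall l, 0 < FC_count m l.
Proof.
move=> nf l; rewrite lt0n; apply/negP => /eqP c0; apply: nf.
exists (wordsle S l) => w fw; exists w; last exact: same_refl.
apply: mem_wordsle; rewrite leqNgt; apply/negP => lw.
have := @FC_prefix S m (take l w) (drop l w); rewrite cat_take_drop => /(_ fw) ft.
have := @cnt_gt0 S m predT _ ft (all_predT _); rewrite -FC_count_cnt size_take lw c0.
by [].
Qed.

Definition conv (a b : nat -> nat) l := \sum_(j < l.+1) a j * b (l - j).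

Lemma conv_ge_l (a b : nat -> nat) l : a l * b 0 <= conv a b l.
Proof. by rewrite /conv big_ord_recr /= subnn leq_addl. Qed.

Lemma conv_ge_r (a b : nat -> nat) l : a 0 * b l <= conv a b l.
Proof. by rewrite /conv big_ord_recl /= subn0 leq_addr. Qed.

Lemma conv_all1 (a b : nat -> nat) l : (forall j, 0 < a j) -> (forall j, 0 < b j) -> l.+1 <= conv a b l.
Proof.
move=> ha hb; rewrite /conv.
apply: (@leq_trans (\sum_(j < l.+1) 1)); first by rewrite sum_nat_const card_ord muln1.
by apply: leq_sum => j _; rewrite muln_gt0 ha hb.
Qed.

Lemma conv_rev (a b : nat -> nat) l : conv a b l = \sum_(t < l.+1) a (l - t) * b t.
Proof.
rewrite /conv (reindex_inj rev_ord_inj) /=; apply: eq_bigr => t _.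
by rewrite subKn // -ltnS.
Qed.

Lemma sum_trunc (F : nat -> nat) B n : (forall t, B <= t -> F t = 0) -> B <= n ->
  \sum_(t < n) F t = \sum_(t < B) F t.
Proof.
move=> HF Bn; rewrite -!(big_mkord xpredT) (big_cat_nat (leq0n B) Bn) /=.
rewrite [X in _ + X]big1_seq ?addn0 // => t /andP[_]; rewrite mem_iota => /andP[Bt _].
exact: HF.
Qed.

Lemma conv_trunc (a b : nat -> nat) B l : (forall t, B <= t -> b t = 0) -> B <= l.+1 ->
  conv a b l = \sum_(t < B) a (l - t) * b t.
Proof.
move=> hb Bl; rewrite conv_rev (@sum_trunc (fun t => a (l - t) * b t) B) //.
by move=> t /hb ->; rewrite muln0.
Qed.

Lemma ev0_conv (a b : nat -> nat) : ev0 a -> ev0 b -> ev0 (conv a b).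
Proof.
move=> [La ha] [Lb hb]; exists (La + Lb) => l Ll; rewrite /conv big1 // => j _.
case: (ltnP j La) => jl; last by rewrite ha.
rewrite hb ?muln0 //; rewrite leq_subRL; last by rewrite -ltnS; exact: ltn_ord.
by apply: leq_trans Ll; rewrite leq_add2r ltnW.
Qed.

Lemma ultper_conv (a b : nat -> nat) : ultper a -> ev0 b -> ultper (conv a b).
Proof.
move=> [p [l0 [pp ha]]] [B hb]; exists p, (l0 + B); split=> // l Ll.
have Bl : B <= l.+1 by apply: leq_trans (leq_addl l0 B) (leq_trans Ll (leqnSn l)).
rewrite (conv_trunc _ hb Bl) (conv_trunc _ hb); last first.
  by apply: leq_trans Bl _; rewrite ltnS leq_addr.
apply: eq_bigr => -[t /= tB] _.
have tl : t <= l by apply: leq_trans (ltnW tB) (leq_trans (leq_addl l0 B) Ll).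
rewrite -addnBAC // ha //.
lia.
Qed.

Lemma ultper_mod (c : nat -> nat) p l0 : 0 < p -> (forall l, l0 <= l -> c (l + p) = c l) ->
  forall n, l0 <= n -> c n = c (l0 + (n - l0) %% p).
Proof.
move=> pp hc n ln.
have H : forall q j, c (l0 + q + j * p) = c (l0 + q).
  move=> q; elim=> [|j IH]; first by rewrite addn0.
  rewrite mulSn (addnC p) addnA hc; [exact: IH | lia].
have e : l0 + (n - l0) %% p + (n - l0) %/ p * p = n.
  by rewrite -addnA (addnC _ (_ * _)) -divn_eq subnKC.
by rewrite -{1}e H.
Qed.

Lemma ultper_bounded (c : nat -> nat) : ultper c -> exists M, forall n, c n <= M.
Proof.
move=> [p [l0 [pp hc]]]; exists (\max_(i < l0 + p) c i) => n.
have ub : forall i, i < l0 + p -> c i <= \max_(i < l0 + p) c i.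
  by move=> i ip; apply: (leq_bigmax (Ordinal ip)).
case: (ltnP n l0) => nl; first by apply: ub; apply: leq_trans nl (leq_addr _ _).
rewrite (ultper_mod pp hc nl); apply: ub; rewrite ltn_add2l; exact: ltn_pmod.
Qed.

Lemma pigeon_per (X : finType) (st : nat -> X) (a : nat -> nat) L :
  (forall l l', L <= l -> L <= l' -> st l = st l' -> st l.+1 = st l'.+1) ->
  (forall l l', L <= l -> L <= l' -> st l = st l' -> a l = a l') -> ultper a.
Proof.
move=> Hs Ha.
pose f (i : 'I_#|X|.+1) := st (L + i).
have : ~~ injectiveb f.
  apply/negP => /injectiveP fi; have := leq_card f fi; by rewrite card_ord ltnn.
case/injectivePn => i [j ij fij].
wlog lt : i j ij fij / i < j.
  move=> W; case: (ltngtP i j) => h; first exact: (W i j).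
  - apply: (W j i) => //; by rewrite eq_sym.
  - by move: ij; rewrite (val_inj h) eqxx.
have E : forall n, st (L + i + n) = st (L + j + n).
  elim=> [|n IH]; first by rewrite !addn0.
  by rewrite !addnS; apply: Hs; rewrite ?IH // -addnA leq_addr.
exists (j - i), (L + i); split; first by rewrite subn_gt0.
move=> l Ll; have -> : l + (j - i) = L + j + (l - (L + i)) by lia.
have Ha' := Ha (L + i + (l - (L + i))) (L + j + (l - (L + i))).
rewrite (_ : L + i + (l - (L + i)) = l) in Ha'; last by lia.
symmetry; apply: Ha'; [lia | lia | ].
have := E (l - (L + i)); rewrite (_ : L + i + (l - (L + i)) = l) //; lia.
Qed.

Lemma ultper_deconv (a r : nat -> nat) d : r 0 = 1 -> (forall t, d < t -> r t = 0) ->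
  ultper (conv a r) -> ultper a.
Proof.
move=> r0 hr hc; set c := conv a r.
have [M hM] := ultper_bounded hc.
have aM : forall n, a n <= M.
  by move=> n; apply: leq_trans (hM n); have := conv_ge_l a r n; rewrite r0 muln1.
have [p [l0 [pp hc']]] := hc.
have rec : forall n, d <= n -> c n = a n + \sum_(t < d) a (n - t.+1) * r t.+1.
  move=> n dn; rewrite /c (@conv_trunc a r d.+1) //.
  by rewrite big_ord_recl /= subn0 r0 muln1.
have arec : forall n, d <= n -> a n = c n - \sum_(t < d) a (n - t.+1) * r t.+1.
  by move=> n dn; rewrite (rec n dn) addnK.
pose st l := ([ffun t : 'I_d.+1 => (inord (a (l - t)) : 'I_M.+1)],
              Ordinal (ltn_pmod (l - l0) pp)).
have win : forall l l', st l = st l' ->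
    (forall t, t <= d -> a (l - t) = a (l' - t)) /\ (l - l0) %% p = (l' - l0) %% p.
  move=> l l' [e1 e2]; split => // t td.
  move/ffunP: e1 => /(_ (inord t)); rewrite !ffunE => /(congr1 val) /=.
  by rewrite !inordK // ltnS.
apply: (@pigeon_per _ st a (l0 + d)).
- move=> l l' Ll Ll' /win [w ph].
  have cE : c l.+1 = c l'.+1.
    rewrite /c (ultper_mod pp hc' (n := l.+1)); last lia.
    rewrite (ultper_mod pp hc' (n := l'.+1)); last lia.
    have -> : l.+1 - l0 = (l - l0) + 1 by lia.
    have -> : l'.+1 - l0 = (l' - l0) + 1 by lia.
    by rewrite -(modnDml (l - l0)) -(modnDml (l' - l0)) ph.
  have aE : a l.+1 = a l'.+1.
    rewrite (arec l.+1) ?(arec l'.+1); try lia.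
    rewrite cE; congr (_ - _); apply: eq_bigr => t _; rewrite !subSS w //.
    by apply: ltnW.
  congr (_, _).
  + apply/ffunP => t; rewrite !ffunE; congr inord.
    case: t => [[|t] /= tlt]; first by rewrite !subn0.
    rewrite !subSS w //; lia.
  + apply: val_inj => /=.
    have -> : l.+1 - l0 = (l - l0) + 1 by lia.
    have -> : l'.+1 - l0 = (l' - l0) + 1 by lia.
    by rewrite -(modnDml (l - l0)) -(modnDml (l' - l0)) ph.
- move=> l l' _ _ /win [w _]; have := w 0 (leq0n d); by rewrite !subn0.
Qed.

Definition PJ (k : nat) (T : 'I_k -> finType) (J : {set 'I_k}) : pred {i : 'I_k & T i} :=
  fun x => tag x \in J.
Arguments PJ {k} T J.

Lemma prod_mx_neq (k : nat) (T : 'I_k -> finType) (mi : forall i, T i -> T i -> nat)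
  (x y : {i : 'I_k & T i}) : tag x != tag y -> prod_mx mi x y = 2.
Proof. by move=> h; rewrite /prod_mx (negbTE h). Qed.

Lemma closedPJ (k : nat) (T : 'I_k -> finType) (mi : forall i, T i -> T i -> nat) (J : {set 'I_k}) :
  closedP (prod_mx mi) (PJ T J).
Proof.
move=> s t Ps Pt; have h : tag s != tag t.
  by apply/eqP => e; move: Pt; rewrite /PJ -e; rewrite /PJ in Ps; rewrite Ps.
by rewrite !prod_mx_neq // eq_sym.
Qed.

Lemma cnt_ext (S : finType) (m : S -> S -> nat) (P Q : pred S) l :
  P =1 Q -> cnt m P l = cnt m Q l.
Proof.
move=> PQ; rewrite /cnt /FCset.
have -> : [set w : l.-tuple S | pbool (FC_word m w) && all P w] =
          [set w : l.-tuple S | pbool (FC_word m w) && all Q w].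
  by apply/setP => w; rewrite !inE (eq_all PQ).
by [].
Qed.

Definition cJ (k : nat) (T : 'I_k -> finType) (mi : forall i, T i -> T i -> nat) J l :=
  cnt (prod_mx mi) (PJ T J) l.

Lemma FC_count_cntP (S : finType) (m : S -> S -> nat) (P : pred S) l :
  (forall x, P x) -> FC_count m l = cnt m P l.
Proof.
move=> HP; rewrite /FC_count /cnt /FCset.
have -> : [set w : l.-tuple S | pbool (FC_word m w) && all P w] =
          [set w : l.-tuple S | pbool (FC_word m w)].
  by apply/setP => w; rewrite !inE (_ : all P w = true) ?andbT //; apply/allP => x _.
by [].
Qed.

Lemma cJ_setT (k : nat) (T : 'I_k -> finType) (mi : forall i, T i -> T i -> nat) l :
  FC_count (prod_mx mi) l = cJ mi setT l.
Proof. by apply: FC_count_cntP => x; rewrite /PJ inE. Qed.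

Lemma cJ1 (k : nat) (T : 'I_k -> finType) (mi : forall i, T i -> T i -> nat) i l :
  FC_count (mi i) l = cJ mi [set i] l.
Proof.
apply: (@FC_count_emb _ _ _ _ (fun x : T i => Tagged T x)).
- by move=> x y H; rewrite -(tagged_asE (u := Tagged T x) y) -H tagged_asE.
- by move=> x; rewrite /PJ inE.
- by case=> j x; rewrite /PJ inE /= => /eqP e; subst; exists x.
- exact: closedPJ.
- by move=> x y; rewrite /prod_mx /= eqxx tagged_asE.
Qed.

Lemma cJ_add (k : nat) (T : 'I_k -> finType) (mi : forall i, T i -> T i -> nat) (j : 'I_k) (J : {set 'I_k}) :
  j \notin J -> forall l, cJ mi (j |: J) l = conv (FC_count (mi j)) (cJ mi J) l.
Proof.
move=> jJ l; rewrite /cJ (@cnt_ext _ _ _ (predU (PJ T [set j]) (PJ T J))).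
- rewrite cnt_split; first by apply: eq_bigr => a _; rewrite cJ1.
  + move=> s; rewrite /PJ inE => /eqP ->; exact: jJ.
  + exact: closedPJ.
  + exact: closedPJ.
  + have E : predU (PJ T [set j]) (PJ T J) =1 PJ T (j |: J).
      by move=> x; rewrite /PJ /= !inE.
    move=> s t; rewrite !E; exact: closedPJ.
- by move=> x; rewrite /PJ /= !inE.
Qed.

Lemma cJ0 (k : nat) (T : 'I_k -> finType) (mi : forall i, T i -> T i -> nat) (J : {set 'I_k}) :
  cJ mi J 0 = 1.
Proof. exact: cnt0. Qed.

Lemma ev0_J (k : nat) (T : 'I_k -> finType) (mi : forall i, T i -> T i -> nat) (J : {set 'I_k}) :
  (forall j, j \in J -> FC_finite (mi j)) -> ev0 (cJ mi J).
Proof.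
move: {2}#|J| (erefl #|J|) => n; elim: n J => [|n IH] J cJn HJ.
- rewrite (cards0_eq cJn); exists 1 => l l1; apply: cnt_pred0 => // x.
  by rewrite /PJ inE.
- have : 0 < #|J| by rewrite cJn.
  rewrite card_gt0 => /set0Pn [j jJ].
  have E : J = j |: (J :\ j) by rewrite setD1K.
  have [L hL] : ev0 (cJ mi J).
    have h1 := FC_finite_ev0 (HJ _ jJ).
    have h2 : ev0 (cJ mi (J :\ j)).
      apply: IH; first by move: cJn; rewrite (cardsD1 j J) jJ add1n => -[].
      by move=> x; rewrite inE => /andP[_ /HJ].
    have [L hL] := ev0_conv h1 h2; exists L => l Ll.
    by rewrite E cJ_add ?setD11 // hL.
  by exists L.
Qed.

Lemma ultper_ext (a b : nat -> nat) : a =1 b -> ultper a -> ultper b.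
Proof.
move=> ab [p [l0 [pp h]]]; exists p, l0; split=> // l Ll; rewrite -!ab; exact: h.
Qed.

Lemma ev0_ultper (a : nat -> nat) : ev0 a -> ultper a.
Proof. move=> [L h]; exists 1, L; split=> // l Ll; rewrite !h //; lia. Qed.

Unset Implicit Arguments.
Theorem lemma4p1 (k : nat) (T : 'I_k -> finType)
    (mi : forall i, T i -> T i -> nat)
    (hcox : forall i, coxeter_matrix (mi i))
    (hirr : forall i, irreducible (mi i)) :
  FC_periodic (prod_mx mi) <->
  ((forall i, FC_finite (mi i)) \/
   exists i, FC_periodic (mi i) /\ forall j, j != i -> FC_finite (mi j)).
Proof.
have ET : FC_count (prod_mx mi) =1 cJ mi setT by move=> l; exact: cJ_setT.
have Esplit : forall i, cJ mi setT =1 conv (FC_count (mi i)) (cJ mi (setT :\ i)).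
  move=> i l; rewrite -cJ_add ?setD11 // setD1K //.
split.
- move=> hp; have hc : ultper (cJ mi setT) by apply: ultper_ext ET hp.
  case: (classic (forall i, FC_finite (mi i))) => [H|]; first by left.
  move/not_all_ex_not => [i ni]; right; exists i.
  have fin : forall j, j != i -> FC_finite (mi j).
    move=> j ji; apply: NNPP => nj.
    have [M hM] := ultper_bounded hc.
    have pos : forall l, 0 < cJ mi (setT :\ i) l.
      move=> l; have jin : j \in setT :\ i by rewrite !inE ji.
      rewrite -(setD1K jin) cJ_add ?setD11 //.
      apply: leq_trans (conv_ge_l _ _ l); rewrite cJ0 muln1.
      exact: infinite_pos.
    have := @conv_all1 _ _ M (infinite_pos ni) pos.
    rewrite -Esplit => h; have := leq_trans h (hM M); by rewrite ltnn.
  split=> //.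
  have [L hL] : ev0 (cJ mi (setT :\ i)).
    by apply: ev0_J => j; rewrite !inE => /andP[ji _]; exact: fin.
  apply: (@ultper_deconv _ (cJ mi (setT :\ i)) L); first exact: cJ0.
  + by move=> t Lt; apply: hL; exact: ltnW.
  + by apply: ultper_ext hc.
- case=> [H|[i [hi fin]]].
  + apply: (ultper_ext (a := cJ mi setT)); first by move=> l; rewrite ET.
    apply: ev0_ultper; apply: ev0_J => j _; exact: H.
  + apply: (ultper_ext (a := cJ mi setT)); first by move=> l; rewrite ET.
    apply: (ultper_ext (a := conv (FC_count (mi i)) (cJ mi (setT :\ i)))).
      by move=> l; rewrite (Esplit i).
    apply: ultper_conv; first exact: hi.
    by apply: ev0_J => j; rewrite !inE => /andP[ji _]; exact: fin.
Qed.
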